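(* Let $G$ be a graph that violates the matching condition, i.e., there is a matching $M$ in $G$ such that the subgraph of $G$ induced by the vertices covered by $M$ has no independent set of size $|M|$. Let $uv$ be any edge of $G$, and let $G'$ be obtained from $G$ by deleting $uv$, adding two new vertices $x_1,x_2$, and adding the edges $ux_1,x_1x_2,x_2v$. Then $G'$ also violates the matching condition, i.e., there is a matching $M'$ in $G'$ such that the subgraph of $G'$ induced by the vertices covered by $M'$ has no independent set of size $|M'|$.
   Context: All graphs are finite and simple. A graph satisfies the matching condition if for every matching $M$ in it, the subgraph induced by the set of vertices covered by $M$ contains an independent set of size $|M|$. *)

(* Defs.v *)
From mathcomp Require Import all_boot.
Set Implicit Arguments. Unset Strict Implicit. Unset Printing Implicit Defensive.

Definition simple_graph (T : finType) (e : rel T) : Prop :=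
  symmetric e /\ irreflexive e.

(* Disjointness forces each
   unordered edge to appear at most once, so #|M| is the number of edges. *)
Definition is_matching (T : finType) (e : rel T) (M : {set T * T}) : Prop :=
  (forall p, p \in M -> e p.1 p.2) /\
  (forall p q, p \in M -> q \in M -> p != q ->
     [&& p.1 != q.1, p.1 != q.2, p.2 != q.1 & p.2 != q.2]).

Definition covered (T : finType) (M : {set T * T}) : {set T} :=
  [set x | [exists p in M, (x == p.1) || (x == p.2)]].

Definition indep_in (T : finType) (e : rel T) (W S : {set T}) : Prop :=
  S \subset W /\ (forall x y, x \in S -> y \in S -> ~~ e x y).

Definition matching_condition (T : finType) (e : rel T) : Prop :=
  forall M : {set T * T}, is_matching e M ->
    exists S : {set T}, indep_in e (covered M) S /\ #|S| = #|M|.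

(* G' : vertex set T + bool, with x1 = inr false, x2 = inr true.
   The edge uv is deleted and the path u x1 x2 v is added. *)
Definition subdiv (T : finType) (e : rel T) (u v : T) : rel (T + bool) :=
  fun a b =>
    match a, b with
    | inl x, inl y => e x y && ~~ (((x == u) && (y == v)) || ((x == v) && (y == u)))
    | inl x, inr false => x == u
    | inr false, inl x => x == u
    | inl x, inr true => x == v
    | inr true, inl x => x == v
    | inr b1, inr b2 => b1 != b2
    end.

(* Main.v *)
Require Import Defs.
From mathcomp Require Import all_boot.
From Stdlib Require Import Classical.
Set Implicit Arguments. Unset Strict Implicit.

Lemma sub_card_exact (T : finType) (k : nat) (A : {set T}) :
  k <= #|A| -> exists B : {set T}, B \subset A /\ #|B| = k.
Proof.
move=> hk; have [n hA] : exists n, #|A| = n by eexists.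
rewrite hA in hk; elim: n A hA hk => [|n IH] A hA hk.
  by exists A; split => //; rewrite hA; move: hk; rewrite leqn0 => /eqP ->.
case: (ltngtP k n.+1) hk => // [hlt _|-> _]; last by exists A.
have: 0 < #|A| by rewrite hA.
case/card_gt0P => x xA.
have hA': #|A :\ x| = n by move: hA; rewrite (cardsD1 x) xA add1n => -[].
have [B [sB cB]] := IH _ hA' hlt.
exists B; split => //; apply: subset_trans sB _; exact: subsetDl.
Qed.

Lemma card_sub_U1 (T : finType) (A B : {set T}) a :
  A \subset a |: B -> #|A| <= #|B|.+1.
Proof.
move=> /subset_leq_card h; apply: leq_trans h _; rewrite cardsU1.
by case: (a \notin B).
Qed.

Lemma key (T : finType) (e : rel T) u v (M : {set T * T})
  (M' : {set (T + bool) * (T + bool)}) :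
  (forall S, indep_in e (covered M) S -> #|S| <> #|M|) ->
  #|M|.+1 <= #|M'| ->
  (forall y, inl y \in covered M' -> y \in covered M) ->
  forall S', indep_in (subdiv e u v) (covered M') S' -> #|S'| <> #|M'|.
Proof.
move=> bad hM hcov S' [sub ind] hS.
pose S := [set x | @inl T bool x \in S'].
have Scov : S \subset covered M.
  by apply/subsetP => x; rewrite inE => /(subsetP sub) /hcov.
have gen : forall S0 : {set T}, S0 \subset S -> ~~ ((u \in S0) && (v \in S0)) ->
    #|M| <= #|S0| -> False.
  move=> S0 s0 nuv hle.
  have [B [sB cB]] := sub_card_exact hle.
  apply: (bad B) cB; split; first by apply: subset_trans Scov; apply: subset_trans s0.
  move=> x y xB yB; have xS0 := subsetP sB _ xB; have yS0 := subsetP sB _ yB.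
  have := ind (inl x) (inl y).
  rewrite /= -!(in_set (fun z => inl z \in S')).
  move=> /(_ (subsetP s0 _ xS0) (subsetP s0 _ yS0)).
  apply: contraNN => exy; rewrite exy /=; apply/negP.
  case/orP => /andP [/eqP ex /eqP ey]; move: nuv; rewrite -ex -ey xS0 yS0 //.
have nx12 : ~~ ((inr false \in S') && (inr true \in S')).
  by apply/andP => -[a b]; move: (ind _ _ a b).
have inl_im : forall x, inl x \in S' -> inl x \in (@inl T bool) @: S.
  by move=> x xS; apply: imset_f; rewrite inE.
have cS : #|(@inl T bool) @: S| = #|S| by apply: card_imset => a b [].
have h1 : #|S'| <= #|S|.+1.
  case Hf : (inr false \in S').
    rewrite -cS; apply: (@card_sub_U1 _ _ _ (inr false)); apply/subsetP.
    move=> [x|[]] xS; rewrite !inE ?inl_im ?orbT //.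
    by move: nx12; rewrite Hf xS.
  rewrite -cS; apply: (@card_sub_U1 _ _ _ (inr true)); apply/subsetP.
  move=> [x|[]] xS; rewrite !inE ?inl_im ?orbT //.
  by rewrite Hf in xS.
case Huv : ((u \in S) && (v \in S)).
  move/andP: Huv => [uS vS].
  have uS' : inl u \in S' by rewrite inE in uS.
  have vS' : inl v \in S' by rewrite inE in vS.
  have nf : inr false \notin S'.
    by apply/negP => h; move: (ind _ _ uS' h) => /=; rewrite eqxx.
  have nt : inr true \notin S'.
    by apply/negP => h; move: (ind _ _ vS' h) => /=; rewrite eqxx.
  have h2 : #|S'| <= #|S|.
    rewrite -cS; apply: subset_leq_card; apply/subsetP.
    move=> [x|[]] xS; rewrite ?inl_im //.
      by rewrite xS in nt.
    by rewrite xS in nf.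
  apply: (gen (S :\ u) (subD1set _ _)); first by rewrite !inE eqxx.
  have := cardsD1 u S; rewrite uS add1n => hc.
  by rewrite -ltnS -hc (leq_trans hM) // -hS.
apply: (gen S (subxx _)); first by rewrite Huv.
by rewrite -ltnS (leq_trans hM) // -hS.
Qed.

Definition fp (T : finType) (p : T * T) : (T + bool) * (T + bool) :=
  (inl p.1, inl p.2).

Lemma fp_inj (T : finType) : injective (@fp T).
Proof. by move=> [a b] [c d] [-> ->]. Qed.

Lemma disjU (X : finType) (A B : {set X}) : [disjoint A & B] -> #|A :|: B| = #|A| + #|B|.
Proof. by move=> h; apply/eqP; rewrite (leq_card_setU A B).2. Qed.

Lemma cov_fp (T : finType) (M : {set T * T}) (N : {set T * T}) p y :
  N \subset M -> p \in (@fp T) @: N -> (inl y == p.1) || (inl y == p.2) -> y \in covered M.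
Proof.
move=> sN /imsetP [q qN ->] h; rewrite inE; apply/existsP; exists q.
by rewrite (subsetP sN _ qN).
Qed.

Lemma match_fp (T : finType) (e : rel T) (M : {set T * T}) p q :
  is_matching e M -> p \in M -> q \in M -> fp p != fp q ->
  [&& (fp p).1 != (fp q).1, (fp p).1 != (fp q).2, (fp p).2 != (fp q).1 & (fp p).2 != (fp q).2].
Proof.
move=> [_ hM] pM qM ne; apply: hM => //; apply: contraNN ne => /eqP -> //.
Qed.

Lemma inl_eqE (T : finType) (a b : T) : (inl a == inl b :> T + bool) = (a == b).
Proof. by []. Qed.
Lemma inl_inrE (T : finType) (a : T) c : (inl a == inr c :> T + bool) = false.
Proof. by []. Qed.
Lemma inr_inlE (T : finType) (a : T) c : (inr c == inl a :> T + bool) = false.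
Proof. by []. Qed.


Lemma caseA (T : finType) (e : rel T) u v (M : {set T * T}) p0 :
  simple_graph e -> e u v -> is_matching e M -> p0 \in M ->
  (u == p0.1) || (u == p0.2) -> (v == p0.1) || (v == p0.2) ->
  let M' := (@fp T) @: (M :\ p0) :|: [set (inl u, inr false); (inr true, inl v)] in
  is_matching (subdiv e u v) M' /\ #|M|.+1 <= #|M'| /\
  (forall y, inl y \in covered M' -> y \in covered M).
Proof.
move=> [esym eirr] euv hM p0M hu hv M'.
have facts : forall q, q \in M :\ p0 -> [&& q.1 != u, q.1 != v, q.2 != u & q.2 != v].
  move=> q; rewrite !inE => /andP [qp0 qM].
  have /and4P [a b c d] := hM.2 q p0 qM p0M qp0.
  by case/orP: hu => /eqP ->; case/orP: hv => /eqP ->; rewrite ?a ?b ?c ?d.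
have nuv : u != v by apply: contraTneq euv => ->; rewrite eirr.
split; last split; first split.
- move=> p; rewrite inE => /orP [/imsetP [q qN ->] | ].
    have /and4P [a b c d] := facts _ qN.
    rewrite /= (negbTE a) (negbTE b) /= andbT; apply: hM.1.
    by move: qN; rewrite inE => /andP [].
  by rewrite !inE => /orP [/eqP -> | /eqP ->] /=.
- move=> p q; rewrite !inE.
  move=> /orP [/imsetP [p1 p1N ->] | /orP [/eqP -> | /eqP ->]];
  move=> /orP [/imsetP [q1 q1N ->] | /orP [/eqP -> | /eqP ->]] ne;
  try (have /and4P [a1 b1 c1 d1] := facts _ p1N);
  try (have /and4P [a2 b2 c2 d2] := facts _ q1N);
  try (have p1M : p1 \in M by move: p1N; rewrite inE => /andP[]);
  try (have q1M : q1 \in M by move: q1N; rewrite inE => /andP[]);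
  first [ by rewrite eqxx in ne
        | exact: match_fp hM p1M q1M ne
        | (rewrite /fp /= ?inl_eqE ?inl_inrE ?inr_inlE /=; repeat (apply/andP; split);
           try done; rewrite eq_sym; done)
        | idtac ].
- rewrite disjU; last first.
    rewrite disjoints_subset; apply/subsetP => x /imsetP [q _ ->]; rewrite !inE /fp.
    by rewrite !xpair_eqE !inl_inrE /= andbF.
  rewrite (card_imset _ (@fp_inj T)).
  by rewrite cards2 (cardsD1 p0 M) p0M xpair_eqE inl_inrE /= add1n addn2.
- move=> y; rewrite inE => /existsP [p /andP [pM' hp]]; move: pM'.
  rewrite inE => /orP [pim | ]; first exact: cov_fp (subD1set M p0) pim hp.
  rewrite !inE => /orP [/eqP pe | /eqP pe]; move: hp; rewrite pe /= ?inl_eqE ?inl_inrE ?inr_inlE ?orbF => /eqP ->;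
  apply/existsP; exists p0; by rewrite p0M.
Qed.

Lemma caseB (T : finType) (e : rel T) u v (M : {set T * T}) :
  is_matching e M -> (u, v) \notin M -> (v, u) \notin M ->
  let M' := (@fp T) @: M :|: [set (inr false, inr true)] in
  is_matching (subdiv e u v) M' /\ #|M|.+1 <= #|M'| /\
  (forall y, inl y \in covered M' -> y \in covered M).
Proof.
move=> hM nuv nvu M'.
split; last split; first split.
- move=> p; rewrite inE => /orP [/imsetP [q qM ->] | ]; last by rewrite inE => /eqP ->.
  rewrite /= (hM.1 _ qM) /=; apply/negP => /orP [] /andP [/eqP e1 /eqP e2].
    by move: nuv; rewrite -e1 -e2 -surjective_pairing qM.
  by move: nvu; rewrite -e1 -e2 -surjective_pairing qM.
- move=> p q; rewrite !inE.
  move=> /orP [/imsetP [p1 p1M ->] | /eqP ->];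
  move=> /orP [/imsetP [q1 q1M ->] | /eqP ->] ne;
  first [ by rewrite eqxx in ne
        | exact: match_fp hM p1M q1M ne
        | by rewrite /fp /= ?inl_eqE ?inl_inrE ?inr_inlE ].
- rewrite disjU; last first.
    rewrite disjoints_subset; apply/subsetP => x /imsetP [q _ ->]; rewrite !inE /fp.
    by rewrite !xpair_eqE !inl_inrE.
  by rewrite (card_imset _ (@fp_inj T)) cards1 addn1.
- move=> y; rewrite inE => /existsP [p /andP [pM' hp]]; move: pM'.
  rewrite inE => /orP [pim | ]; first exact: cov_fp (subxx M) pim hp.
  by rewrite !inE => /eqP pe; move: hp; rewrite pe /= ?inl_inrE.
Qed.

Theorem mainTheorem3 (T : finType) (e : rel T) (u v : T) :
  simple_graph e ->
  ~ matching_condition e ->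
  e u v ->
  ~ matching_condition (subdiv e u v).
Proof.
move=> sg nmc euv mc'; apply: nmc => M hM; apply: NNPP => hno.
have bad : forall S, indep_in e (covered M) S -> #|S| <> #|M|.
  by move=> S hi hs; apply: hno; exists S.
suff [M' [hm [hc hcov]]] : exists M' : {set (T + bool) * (T + bool)},
    is_matching (subdiv e u v) M' /\ #|M|.+1 <= #|M'| /\
    (forall y, inl y \in covered M' -> y \in covered M).
  have [S' [hi hs]] := mc' M' hm; exact: key bad hc hcov S' hi hs.
case E1 : ((u, v) \in M).
  by eexists; apply: (caseA (p0 := (u, v)) sg euv hM E1); rewrite eqxx ?orbT.
case E2 : ((v, u) \in M).
  by eexists; apply: (caseA (p0 := (v, u)) sg euv hM E2); rewrite eqxx ?orbT.
by eexists; apply: (caseB hM); rewrite ?E1 ?E2.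
Qed.
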